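(* For a mutually orthogonal $d$-dimensional pure-state ensemble $\Omega=\{(1/k,|\psi_i\rangle)\}_{i=0}^{k-1}$ with $k<d$, a necessary condition for $\Omega$ to saturate $\mathbf{C}_{\mathrm{MIO}}(\Omega)+\mathbf{S}(\Omega)=\log_2 d$ is \[ C_{\max}(\hat\omega)+S(\hat\omega)=\log_2 d, \] where $\hat\omega=\frac1k\sum_{i=0}^{k-1}|\psi_i\rangle\langle\psi_i|$.
   Context: Incoherent states $\mathcal{I}$ are diagonal in the computational basis; MIO are channels mapping $\mathcal{I}$ into itself. $C_R(\rho)=\min\{s\ge0:(\rho+s\tau)/(1+s)\in\mathcal{I}\text{ for some state }\tau\}$ is the robustness of coherence and $C_{\max}(\rho)=\log_2(1+C_R(\rho))=\min_{\sigma\in\mathcal{I}}D_{\max}(\rho\|\sigma)$ is the max-relative entropy of coherence. $\mathbf{C}_{\mathrm{MIO}}(\Omega)=\log_2(1+\eta)$, $\eta=\max\sum_jp_jC_R(\sigma_j)$ over MIO channels $\mathcal{N}_{A\to BA'}$ ($\dim B=k$, $A'\cong A$) with $\sigma_j=\mathrm{tr}_B[\mathcal{N}(\rho_j)]$ and $\sum_jp_j\mathrm{tr}[\mathcal{N}(\rho_j)(|j\rangle\langle j|_B\otimes I_{A'})]=P_{\mathrm{suc}}(\Omega)$ (optimal POVM discrimination probability). $\mathbf{S}(\Omega)=S(\hat\omega)$, the von Neumann entropy of the average state. *)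

(* Defs.v *)
From HB Require Import structures.
From mathcomp Require Import all_boot all_order all_algebra.
From mathcomp Require Import complex mxtens.
From mathcomp Require Import boolp classical_sets reals exp.
Set Implicit Arguments. Unset Strict Implicit. Unset Printing Implicit Defensive.
Import Order.TTheory GRing.Theory Num.Theory.
Local Open Scope ring_scope.
Local Open Scope complex_scope.

Section QDefs.
Variable R : realType.
Local Notation C := R[i].

Definition adj {m n} (A : 'M[C]_(m, n)) : 'M[C]_(n, m) := (map_mx (@conjc R) A)^T.

(* positive semidefinite: <v|A|v> is a nonnegative real for every v *)
Definition psd {n} (A : 'M[C]_n) : Prop :=
  forall v : 'cV[C]_n, 0 <= (adj v *m A *m v) 0 0.

Definition is_state {n} (A : 'M[C]_n) : Prop := psd A /\ \tr A = 1.

Definition incoherent {n} (A : 'M[C]_n) : Prop := is_state A /\ is_diag_mx A.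

Definition log2 (x : R) : R := ln x / ln 2.

Definition xlog2x (x : R) : R := if x == 0 then 0 else x * log2 x.

Definition spectrum {n} (A : 'M[C]_n) (lam : 'I_n -> R) : Prop :=
  char_poly A = \prod_(i < n) ('X - ((lam i)%:C)%:P).

(* von Neumann entropy S(rho) = - sum_i lam_i log2 lam_i (the set is a singleton) *)
Definition vN_entropy {n} (A : 'M[C]_n) : R :=
  sup [set s : R | exists lam, spectrum A lam /\ s = - \sum_(i < n) xlog2x (lam i)].

Definition robustness {n} (rho : 'M[C]_n) : R :=
  inf [set s : R | 0 <= s /\ exists tau : 'M[C]_n, is_state tau /\
         incoherent (((1 + s)^-1)%:C *: (rho + s%:C *: tau))].

Definition Cmax {n} (rho : 'M[C]_n) : R := log2 (1 + robustness rho).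

Definition is_channel {m n} (N : 'M[C]_m -> 'M[C]_n) : Prop :=
  exists (l : nat) (K : 'I_l -> 'M[C]_(n, m)),
    (forall X, N X = \sum_(i < l) K i *m X *m adj (K i)) /\
    \sum_(i < l) adj (K i) *m K i = 1%:M.

Definition is_MIO {m n} (N : 'M[C]_m -> 'M[C]_n) : Prop :=
  is_channel N /\ forall sigma, incoherent sigma -> incoherent (N sigma).

(* partial trace over the first factor B (dim k) of B (x) A' (dim d) *)
Definition ptraceB {k d} (X : 'M[C]_(k * d)) : 'M[C]_d :=
  \matrix_(a, a') \sum_(b < k) X (mxtens_index (b, a)) (mxtens_index (b, a')).

Definition is_povm {k d} (M : 'I_k -> 'M[C]_d) : Prop :=
  (forall j, psd (M j)) /\ \sum_(j < k) M j = 1%:M.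

Definition P_suc {k d} (p : 'I_k -> R) (rho : 'I_k -> 'M[C]_d) : R :=
  sup [set x : R | exists M : 'I_k -> 'M[C]_d, is_povm M /\
         x = complex.Re (\sum_(j < k) (p j)%:C * \tr (M j *m rho j))].

Definition eta_MIO {k d} (p : 'I_k -> R) (rho : 'I_k -> 'M[C]_d) : R :=
  sup [set x : R | exists N : 'M[C]_d -> 'M[C]_(k * d), is_MIO N /\
         complex.Re (\sum_(j < k) (p j)%:C *
               \tr (N (rho j) *m (delta_mx j j *t (1%:M : 'M[C]_d)))) = P_suc p rho /\
         x = \sum_(j < k) p j * robustness (ptraceB (N (rho j)))].

Definition C_MIO {k d} (p : 'I_k -> R) (rho : 'I_k -> 'M[C]_d) : R :=
  log2 (1 + eta_MIO p rho).

Definition avg_state {k d} (p : 'I_k -> R) (rho : 'I_k -> 'M[C]_d) : 'M[C]_d :=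
  \sum_(j < k) (p j)%:C *: rho j.

Definition pure_proj {d} (psi : 'cV[C]_d) : 'M[C]_d := psi *m adj psi.

Definition orthonormal_vecs {k d} (psi : 'I_k -> 'cV[C]_d) : Prop :=
  forall i j, (adj (psi i) *m psi j) 0 0 = (i == j)%:R.

Definition unif {k} : 'I_k -> R := fun _ => k%:R^-1.

End QDefs.
Arguments unif {R k}.

(* Main.v *)
Require Import Defs.
From HB Require Import structures.
From mathcomp Require Import all_boot all_order all_algebra.
From mathcomp Require Import complex mxtens.
From mathcomp Require Import boolp classical_sets reals exp.
From mathcomp Require Import ring lra.
Import Order.TTheory GRing.Theory Num.Theory.

Module Aux.
Set Implicit Arguments. Unset Strict Implicit. Unset Printing Implicit Defensive.
Local Open Scope classical_set_scope.
Local Open Scope ring_scope.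
Local Open Scope complex_scope.


Section S.
Variable R : realType.
Local Notation C := R[i].
Local Notation iC := (Complex (0:R) 1).

Lemma hadjM m n p (A : 'M[C]_(m, n)) (B : 'M[C]_(n, p)) : adj (A *m B) = adj B *m adj A.
Proof. by rewrite /adj map_mxM trmx_mul. Qed.

Lemma hadjK m n (A : 'M[C]_(m, n)) : adj (adj A) = A.
Proof. by apply/matrixP => i j; rewrite !mxE conjcK. Qed.

Lemma hadjD m n (A B : 'M[C]_(m, n)) : adj (A + B) = adj A + adj B.
Proof. by apply/matrixP => i j; rewrite !mxE rmorphD. Qed.

Lemma hadjN m n (A : 'M[C]_(m, n)) : adj (- A) = - adj A.
Proof. by apply/matrixP => i j; rewrite !mxE rmorphN. Qed.

Lemma hadjZ m n (c : C) (A : 'M[C]_(m, n)) : adj (c *: A) = (conjc c) *: adj A.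
Proof. by apply/matrixP => i j; rewrite !mxE rmorphM. Qed.

Lemma hadj_sum m n I (r : seq I) (P : pred I) (F : I -> 'M[C]_(m, n)) :
  adj (\sum_(i <- r | P i) F i) = \sum_(i <- r | P i) adj (F i).
Proof.
elim/big_rec2: _ => [|i A B _ <-]; last by rewrite hadjD.
by apply/matrixP => i j; rewrite !mxE rmorph0.
Qed.

Lemma conjc_bool (b : bool) : (conjc (b%:R : C)) = b%:R.
Proof. by case: b; rewrite /conjc /= ?oppr0. Qed.

Lemma conjcN' (x : C) : conjc (- x) = - conjc x.
Proof. by case: x. Qed.

Lemma conjc1' : (conjc (1 : C)) = 1.
Proof. by rewrite /conjc /= ?oppr0. Qed.

Lemma hadj1 n : adj (1%:M : 'M[C]_n) = 1%:M.
Proof. by apply/matrixP => i j; rewrite !mxE conjc_bool eq_sym. Qed.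

Lemma hadj_delta m n (i : 'I_m) (j : 'I_n) : adj (delta_mx i j : 'M[C]_(m,n)) = delta_mx j i.
Proof. by apply/matrixP => a b; rewrite !mxE conjc_bool andbC. Qed.

Lemma psd_entry n (A : 'M[C]_n) (a b : 'I_n) :
  (adj (delta_mx a 0 : 'cV[C]_n) *m A *m (delta_mx b 0 : 'cV[C]_n)) 0 0 = A a b.
Proof. by rewrite hadj_delta -rowE -colE !mxE. Qed.

Lemma psd_conj n (X : 'M[C]_n) m (B : 'M[C]_(n, m)) : psd X -> psd (adj B *m X *m B).
Proof.
move=> hX; rewrite /psd => v.
have -> : adj v *m (adj B *m X *m B) *m v = adj (B *m v) *m X *m (B *m v) by rewrite hadjM !mulmxA.
exact: hX.
Qed.

Lemma psd1 n : psd (1%:M : 'M[C]_n).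
Proof.
rewrite /psd => v; rewrite mulmx1 !mxE; apply: sumr_ge0 => i _.
by rewrite !mxE mulrC mulcJ_ge0.
Qed.

Lemma psd_AtA n m (B : 'M[C]_(n, m)) : psd (adj B *m B).
Proof. by have := psd_conj B (@psd1 n); rewrite mulmx1. Qed.

Lemma psd_pure n (v : 'cV[C]_n) : psd (pure_proj v).
Proof. by rewrite /pure_proj -{1}(hadjK v); apply: psd_AtA. Qed.

Lemma psdD n (A B : 'M[C]_n) : psd A -> psd B -> psd (A + B).
Proof. by move=> hA hB; rewrite /psd => v; rewrite mulmxDr mulmxDl mxE addr_ge0. Qed.

Lemma psd0 n : psd (0 : 'M[C]_n).
Proof. by rewrite /psd => v; rewrite mulmx0 mul0mx mxE. Qed.

Lemma psdZ n (c : C) (A : 'M[C]_n) : 0 <= c -> psd A -> psd (c *: A).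
Proof. by move=> hc hA; rewrite /psd => v; rewrite -scalemxAr -scalemxAl mxE mulr_ge0. Qed.

Lemma psd_sum n I (r : seq I) (P : pred I) (F : I -> 'M[C]_n) :
  (forall i, P i -> psd (F i)) -> psd (\sum_(i <- r | P i) F i).
Proof.
move=> h; elim/big_rec: _ => [|i A Pi hA]; first exact: psd0.
by apply: psdD => //; apply: h.
Qed.

Lemma psd_diag n (A : 'M[C]_n) (i : 'I_n) : psd A -> 0 <= A i i.
Proof. by move=> h; rewrite -psd_entry. Qed.

Lemma psd_tr n (A : 'M[C]_n) : psd A -> 0 <= \tr A.
Proof. by move=> h; rewrite /mxtrace sumr_ge0 // => i _; apply: psd_diag. Qed.

Lemma ge0_anti (x : C) : 0 <= x -> 0 <= - x -> x = 0.
Proof. by move=> h1 h2; apply/le_anti; rewrite h1 andbT -oppr_ge0. Qed.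

Lemma ge0_eq (x y : C) : x = y -> 0 <= x -> 0 <= y.
Proof. by move=> ->. Qed.

Lemma psd_form2 n (A : 'M[C]_n) (a b : 'I_n) (t : C) :
  (adj (delta_mx a 0 + t *: delta_mx b 0 : 'cV[C]_n) *m A *m (delta_mx a 0 + t *: delta_mx b 0 : 'cV[C]_n)) 0 0
  = A a a + t * A a b + (conjc t) * A b a + (conjc t) * t * A b b.
Proof.
rewrite hadjD hadjZ !mulmxDl !mulmxDr -!scalemxAl -!scalemxAr.
rewrite !hadj_delta -!rowE -!colE !mxE; ring.
Qed.

Lemma psd_tr0 n (A : 'M[C]_n) : psd A -> \tr A = 0 -> A = 0.
Proof.
move=> hA ht.
have hd : forall i, A i i = 0.
  move=> i; move/eqP: ht; rewrite /mxtrace psumr_eq0 => [/allP h|j _]; last exact: psd_diag.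
  by apply/eqP; apply: (h i); rewrite mem_index_enum.
apply/matrixP => a b; rewrite mxE.
have f : forall t : C, 0 <= t * A a b + (conjc t) * A b a.
  move=> t; have := hA (delta_mx a 0 + t *: delta_mx b 0).
  by rewrite psd_form2 !hd !mulr0 addr0 add0r.
have ci : (conjc iC) = - iC :> C by apply/eqP; rewrite eq_complex /= oppr0 !eqxx.
have h1 : 0 <= A a b + A b a by have := f 1; rewrite conjc1' !mul1r.
have h2 : 0 <= - (A a b + A b a).
  by have := f (-1); rewrite conjcN' conjc1'; apply: ge0_eq; ring.
have e1 : A a b + A b a = 0 by apply: ge0_anti.
have h3 : 0 <= iC * (A a b - A b a).
  by have := f iC; rewrite ci; apply: ge0_eq; ring.
have h4 : 0 <= - (iC * (A a b - A b a)).
  by have := f (- iC); rewrite conjcN' ci opprK; apply: ge0_eq; ring.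
have /eqP := ge0_anti h3 h4; rewrite mulf_eq0 => /orP [|].
  by rewrite eq_complex /= oner_eq0 andbF.
rewrite subr_eq0 => /eqP e2; move: e1; rewrite e2 -mulr2n => /eqP.
by rewrite mulrn_eq0 /= => /eqP.
Qed.

End S. 


Section S2.
Variable R : realType.
Local Notation C := R[i].

Lemma sum_deltal n (w : 'I_n) (F : 'I_n -> C) : \sum_u (u == w)%:R * F u = F w.
Proof.
rewrite (bigD1 w) //= eqxx mul1r big1 ?addr0 // => u /negbTE ->; by rewrite mul0r.
Qed.

Lemma sum_deltar n (w : 'I_n) (F : 'I_n -> C) : \sum_u F u * (u == w)%:R = F w.
Proof. by rewrite -[RHS](sum_deltal w); apply: eq_bigr => u _; rewrite mulrC. Qed.

Section Chan.
Variables m n : nat.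
Variable N : 'M[C]_m -> 'M[C]_n.
Hypothesis hN : is_channel N.

Lemma chanD X Y : N (X + Y) = N X + N Y.
Proof.
case: hN => l [K [e _]]; rewrite !e -big_split /=; apply: eq_bigr => i _.
by rewrite mulmxDr mulmxDl.
Qed.

Lemma chanZ (a : C) X : N (a *: X) = a *: N X.
Proof.
case: hN => l [K [e _]]; rewrite !e scaler_sumr; apply: eq_bigr => i _.
by rewrite -scalemxAr -scalemxAl.
Qed.

Lemma chanB X Y : N (X - Y) = N X - N Y.
Proof. by rewrite chanD -scaleN1r chanZ scaleN1r. Qed.

Lemma chan_psd X : psd X -> psd (N X).
Proof.
case: hN => l [K [e _]] hX; rewrite e; apply: psd_sum => i _.
by rewrite -{1}(hadjK (K i)); apply: psd_conj.
Qed.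

Lemma chan_tr X : \tr (N X) = \tr X.
Proof.
case: hN => l [K [e h1]]; rewrite e raddf_sum /=.
rewrite (eq_bigr (fun i => \tr (adj (K i) *m K i *m X))); last first.
  by move=> i _; rewrite mxtrace_mulC mulmxA.
by rewrite -raddf_sum /= -mulmx_suml h1 mul1mx.
Qed.
End Chan.

Section Blocks.
Variables k d : nat.

Definition Eb (b : 'I_k) : 'M[C]_(k * d, d) :=
  \matrix_(u, a) ((u == mxtens_index (b, a))%:R).

Definition blk (b : 'I_k) (X : 'M[C]_(k * d)) : 'M[C]_d := adj (Eb b) *m X *m Eb b.

Lemma blkE b X a a' : blk b X a a' = X (mxtens_index (b, a)) (mxtens_index (b, a')).
Proof.
rewrite /blk -mulmxA mxE.
rewrite (eq_bigr (fun u => (u == mxtens_index (b, a))%:R * (X *m Eb b) u a')); last first.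
  by move=> u _; rewrite !mxE conjc_bool.
rewrite sum_deltal mxE.
rewrite (eq_bigr (fun u => X (mxtens_index (b, a)) u * (u == mxtens_index (b, a'))%:R)); last first.
  by move=> u _; rewrite !mxE.
by rewrite sum_deltar.
Qed.

Lemma ptraceBE (X : 'M[C]_(k * d)) : ptraceB X = \sum_b blk b X.
Proof. by apply/matrixP => a a'; rewrite !mxE summxE; apply: eq_bigr => b _; rewrite blkE. Qed.

Lemma sum_tens (F : 'I_(k * d) -> C) :
  \sum_u F u = \sum_b \sum_a F (mxtens_index (b, a)).
Proof.
rewrite pair_big /=; apply: reindex => /=.
exists (@mxtens_unindex k d) => [[b a] _ | u _] /=; first by rewrite mxtens_indexK. 
exact: (mxtens_unindexK u).
Qed.

Lemma tr_blk_sum X : \sum_b \tr (blk b X) = \tr X.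
Proof.
rewrite [RHS]/mxtrace sum_tens; apply: eq_bigr => b _.
by rewrite /mxtrace; apply: eq_bigr => a _; rewrite blkE.
Qed.

Lemma tr_ptraceB (X : 'M[C]_(k * d)) : \tr (ptraceB X) = \tr X.
Proof. by rewrite ptraceBE raddf_sum /= tr_blk_sum. Qed.

Lemma psd_blk b X : psd X -> psd (blk b X).
Proof. exact: psd_conj. Qed.

Lemma blk_diag b X : is_diag_mx X -> is_diag_mx (blk b X).
Proof.
move=> /is_diag_mxP h; apply/is_diag_mxP => a a' ne; rewrite blkE h //.
apply: contra ne => /eqP /val_inj /(congr1 (@mxtens_unindex k d)).
by rewrite !mxtens_indexK => -[->].
Qed.

Lemma blkB b X Y : blk b (X - Y) = blk b X - blk b Y.
Proof. by rewrite /blk mulmxBr mulmxBl. Qed.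

Lemma blkZ b (c : C) X : blk b (c *: X) = c *: blk b X.
Proof. by rewrite /blk -scalemxAr -scalemxAl. Qed.

Lemma D_E (j : 'I_k) : delta_mx j j *t (1%:M : 'M[C]_d) = Eb j *m adj (Eb j).
Proof.
apply/matrixP => u v; case: (mxtens_indexP u) => b a; case: (mxtens_indexP v) => b' a'.
rewrite tensmxE !mxE.
rewrite (eq_bigr (fun c => ((b == j) && (a == c))%:R * ((b' == j) && (a' == c))%:R)); last first.
  move=> c _; rewrite !mxE conjc_bool !(inj_eq (can_inj (@mxtens_indexK k d))).
  by rewrite !xpair_eqE.
case: (b == j); case: (b' == j) => /=; last 3 first.
- by rewrite mul0r big1 // => c _; rewrite mulr0.
- by rewrite mul0r big1 // => c _; rewrite mul0r.
- by rewrite mul0r big1 // => c _; rewrite mul0r.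
rewrite (eq_bigr (fun c => (c == a)%:R * (a' == c)%:R)); last by move=> c _; rewrite eq_sym.
by rewrite sum_deltal eq_sym mul1r.
Qed.

Lemma tr_D X (j : 'I_k) : \tr (X *m (delta_mx j j *t (1%:M : 'M[C]_d))) = \tr (blk j X).
Proof. by rewrite D_E mulmxA mxtrace_mulC /blk mulmxA. Qed.

End Blocks.
End S2.


Section S3.
Variable R : realType.
Local Notation C := R[i].
Variables k d : nat.
Variable psi : 'I_k -> 'cV[C]_d.
Hypothesis ortho : orthonormal_vecs psi.

Local Notation rho := (fun j => pure_proj (psi j)).
Definition Pr : 'M[C]_d := \sum_i pure_proj (psi i).

Lemma ip i j : adj (psi i) *m psi j = (i == j)%:R%:M.
Proof. by apply/matrixP => a b; rewrite !ord1 ortho !mxE eqxx mulr1n. Qed.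

Lemma rho_mul i j : pure_proj (psi i) *m pure_proj (psi j) = (i == j)%:R *: pure_proj (psi i).
Proof.
rewrite /pure_proj mulmxA -(mulmxA (psi i)) ip mul_mx_scalar -scalemxAl.
case: eqVneq => [->|_]; by rewrite ?scale1r ?scale0r.
Qed.

Lemma tr_rho j : \tr (pure_proj (psi j)) = 1.
Proof. by rewrite /pure_proj mxtrace_mulC ip eqxx mxtrace_scalar mulr1n. Qed.

Lemma adj_rho j : adj (pure_proj (psi j)) = pure_proj (psi j).
Proof. by rewrite /pure_proj hadjM hadjK. Qed.

Lemma Pr_rho j : Pr *m pure_proj (psi j) = pure_proj (psi j).
Proof.
rewrite /Pr mulmx_suml (bigD1 j) //= rho_mul eqxx scale1r big1 ?addr0 //.
by move=> i /negbTE ne; rewrite rho_mul ne scale0r.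
Qed.

Lemma Pr2 : Pr *m Pr = Pr.
Proof. by rewrite {1}/Pr mulmx_sumr; apply: eq_bigr => j _; rewrite Pr_rho. Qed.

Lemma adj_Pr : adj Pr = Pr.
Proof. by rewrite /Pr hadj_sum; apply: eq_bigr => j _; rewrite adj_rho. Qed.

Lemma tr_Pr : \tr Pr = k%:R.
Proof.
rewrite /Pr raddf_sum /= (eq_bigr (fun _ => 1)); last by move=> j _; rewrite tr_rho.
by rewrite sumr_const card_ord.
Qed.

Lemma psd_1_Pr : psd (1%:M - Pr).
Proof.
have -> : 1%:M - Pr = adj (1%:M - Pr) *m (1%:M - Pr).
  by rewrite hadjD hadjN hadj1 adj_Pr mulmxBl mul1mx mulmxBr mulmx1 Pr2 subrr subr0.
exact: psd_AtA.
Qed.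

Lemma psd_Pr_rho j : psd (Pr - pure_proj (psi j)).
Proof.
rewrite /Pr (bigD1 j) //= addrAC subrr add0r; apply: psd_sum => i _; exact: psd_pure.
Qed.

Lemma psd_rho j : psd (pure_proj (psi j)).
Proof. exact: psd_pure. Qed.

Lemma avgE : avg_state unif rho = (k%:R^-1)%:C *: Pr.
Proof. by rewrite /avg_state /Pr scaler_sumr. Qed.

End S3.


Section S4.
Variable R : realType.
Local Notation C := R[i].

Lemma ge0_real (z : C) : 0 <= z -> z = (complex.Re z)%:C.
Proof. by case: z => a b; rewrite lecE /= => /andP [/eqP -> _]. Qed.

Lemma Re_ge0 (z : C) : 0 <= z -> 0 <= complex.Re z.
Proof. by case: z => a b; rewrite lecE /= => /andP [_ h]. Qed.

Lemma Re_le (z w : C) : z <= w -> complex.Re z <= complex.Re w.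
Proof. by rewrite lecE => /andP [_ h]. Qed.

Lemma ReC (x : R) : complex.Re (x%:C) = x.
Proof. by []. Qed.

Lemma le_sup_of (S : set R) (b x : R) : (forall y, S y -> y <= b) -> S x -> x <= sup S.
Proof. by move=> hb hx; apply: ub_le_sup => //; exists b. Qed.

Variables k d : nat.
Hypothesis hk : (0 < k)%N.

Lemma sumk : \sum_(j < k) (k%:R^-1 : R) = 1.
Proof.
rewrite sumr_const card_ord.
have -> : (k%:R^-1 : R) *+ k = k%:R^-1 * k%:R by rewrite mulr_natr.
by rewrite mulVf // pnatr_eq0 -lt0n.
Qed.

Lemma sumkC : \sum_(j < k) ((k%:R^-1 : R)%:C : C) = 1.
Proof. by rewrite -rmorph_sum /= sumk. Qed.

Variable psi : 'I_k -> 'cV[C]_d.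
Hypothesis ortho : orthonormal_vecs psi.

Lemma trA_rho (A : 'M[C]_d) j : \tr (A *m pure_proj (psi j)) = (adj (psi j) *m A *m psi j) 0 0.
Proof. by rewrite /pure_proj mulmxA mxtrace_mulC mulmxA /mxtrace big_ord1. Qed.

Lemma trA_rho_ge0 (A : 'M[C]_d) j : psd A -> 0 <= \tr (A *m pure_proj (psi j)).
Proof. by move=> h; rewrite trA_rho; apply: h. Qed.

Lemma Psuc_ub (M : 'I_k -> 'M[C]_d) : is_povm M ->
  complex.Re (\sum_(j < k) ((k%:R^-1 : R)%:C) * \tr (M j *m pure_proj (psi j))) <= 1.
Proof.
case=> hM hS.
have h1 j : 0 <= 1 - \tr (M j *m pure_proj (psi j)).
  have -> : 1 - \tr (M j *m pure_proj (psi j)) = \tr ((1%:M - M j) *m pure_proj (psi j)).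
    by rewrite mulmxBl mxtraceD mul1mx (tr_rho ortho) raddfN.
  apply: trA_rho_ge0; rewrite -hS (bigD1 j) //= addrAC subrr add0r.
  by apply: psd_sum => i _; apply: hM.
have : 0 <= \sum_(j < k) ((k%:R^-1 : R)%:C) * (1 - \tr (M j *m pure_proj (psi j))).
  apply: sumr_ge0 => j _; apply: mulr_ge0 => //.
  by rewrite ler0c invr_ge0 ler0n.
rewrite (eq_bigr (fun j => (k%:R^-1 : R)%:C - (k%:R^-1 : R)%:C * \tr (M j *m pure_proj (psi j)))); last first.
  by move=> j _; rewrite mulrBr mulr1.
rewrite sumrB sumkC subr_ge0 => /Re_le.
by [].
Qed.


Lemma Psuc_ge1 : 1 <= P_suc unif (fun j => pure_proj (psi j)).
Proof.
rewrite /P_suc /unif.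
apply: (le_sup_of (b := 1)).
  by move=> x [M [hM ->]]; apply: Psuc_ub.
pose j0 : 'I_k := Ordinal hk.
pose M j := pure_proj (psi j) + (((j == j0)%:R : C) *: (1%:M - Pr psi)).
exists M; split.
  split.
    move=> j; apply: psdD; first exact: psd_pure.
    by apply: psdZ; [rewrite ler0n | exact: psd_1_Pr].
  rewrite big_split /= -/(Pr psi) (bigD1 j0) //= scale1r big1 ?addr0.
    by rewrite addrC subrK.
  by move=> j /negbTE ->; rewrite scale0r.
have -> : \sum_(j < k) ((k%:R^-1 : R)%:C) * \tr (M j *m pure_proj (psi j)) =
          \sum_(j < k) ((k%:R^-1 : R)%:C).
  apply: eq_bigr => j _; rewrite /M mulmxDl mxtraceD -scalemxAl mulmxBl mul1mx.
  by rewrite (Pr_rho ortho) subrr scaler0 mxtrace0 addr0 (rho_mul ortho) eqxx scale1r (tr_rho ortho) mulr1.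
by rewrite sumkC.
Qed.

End S4.


Section S5.
Variable R : realType.
Local Notation C := R[i].

Lemma empty_set0 (S : set R) : ~ (S !=set0) -> S = set0.
Proof. by move=> e; apply/seteqP; split => // x Sx; apply: e; exists x. Qed.

Lemma inf_ge0 (S : set R) : (forall y, S y -> 0 <= y) -> 0 <= inf S.
Proof.
move=> h; have [ne|e] := pselect (S !=set0); first exact: lb_le_inf.
by rewrite (empty_set0 e) inf0.
Qed.

Lemma inf_le_of (S : set R) x : (forall y, S y -> 0 <= y) -> S x -> inf S <= x.
Proof. by move=> h Sx; apply: ge_inf => //; exists 0. Qed.

Lemma sup_le_of (S : set R) b : (forall y, S y -> y <= b) -> 0 <= b -> sup S <= b.
Proof.
move=> h b0; have [ne|e] := pselect (S !=set0); first exact: ge_sup.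
by rewrite (empty_set0 e) sup0.
Qed.

Lemma rob_ge0 n (rho : 'M[C]_n) : 0 <= robustness rho.
Proof. by apply: inf_ge0 => y []. Qed.

Lemma diagZ n (a : C) (A : 'M[C]_n) : is_diag_mx A -> is_diag_mx (a *: A).
Proof. by move=> /is_diag_mxP h; apply/is_diag_mxP => i j ne; rewrite mxE h // mulr0. Qed.

Lemma realcM (x y : R) : (x * y)%:C = x%:C * y%:C :> C.
Proof. by rewrite rmorphM. Qed.

Lemma realcB (x y : R) : (x - y)%:C = x%:C - y%:C :> C.
Proof. by rewrite rmorphB. Qed.

Lemma realcD (x y : R) : (x + y)%:C = x%:C + y%:C :> C.
Proof. by rewrite rmorphD. Qed.

Lemma realcV (x : R) : (x^-1)%:C = (x%:C)^-1 :> C.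
Proof. by rewrite fmorphV. Qed.

Lemma rob_le n (rho D : 'M[C]_n) (c : R) : is_state rho -> psd D -> is_diag_mx D ->
  0 <= c -> psd (c%:C *: D - rho) -> robustness rho <= c * complex.Re (\tr D) - 1.
Proof.
move=> [hr tr1] hD dD c0 hcD.
set t := complex.Re (\tr D).
have ht : \tr D = t%:C by apply: ge0_real; apply: psd_tr.
have htr : \tr (c%:C *: D - rho) = (c * t - 1)%:C.
  by rewrite mxtraceD raddfN /= mxtraceZ tr1 ht realcB realcM.
have h1 : 1 <= c * t by rewrite -subr_ge0 -ler0c -htr; apply: psd_tr.
apply: inf_le_of; first by move=> y [].
split; first by rewrite subr_ge0.
have [e1|ne1] := eqVneq (c * t) 1.
  have e : c%:C *: D = rho.
    by apply/eqP; rewrite -subr_eq0; apply/eqP; apply: psd_tr0 => //; rewrite htr e1 subrr.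
  exists rho; split; first by [].
  rewrite e1 subrr addr0 invr1 scale0r addr0 scale1r.
  by split; [| rewrite -e; apply: diagZ].
have lt1 : 1 < c * t by rewrite lt_neqAle eq_sym ne1.
have l0 : (c * t - 1) != 0 by rewrite subr_eq0.
exists (((c * t - 1)^-1)%:C *: (c%:C *: D - rho)); split.
  split; first by apply: psdZ => //; rewrite ler0c invr_ge0 subr_ge0.
  by rewrite mxtraceZ htr -realcM mulVf.
rewrite scalerA -realcM divff // scale1r.
have -> : rho + (c%:C *: D - rho) = c%:C *: D by rewrite addrC subrK.
have -> : 1 + (c * t - 1) = c * t by rewrite addrC subrK.
rewrite scalerA -realcM.
split; last exact: diagZ.
split; first by apply: psdZ => //; rewrite ler0c mulr_ge0 // invr_ge0 (le_trans _ h1).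
rewrite mxtraceZ ht -realcM -mulrA.
by rewrite mulVf // gt_eqF // (lt_le_trans _ h1).
Qed.

End S5.


Section S6.
Variable R : realType.
Local Notation C := R[i].
Variables k d : nat.
Hypothesis hk : (0 < k)%N.
Variable psi : 'I_k -> 'cV[C]_d.
Hypothesis ortho : orthonormal_vecs psi.

Local Notation om := (avg_state unif (fun j => pure_proj (psi j))).

Lemma kR0 : (k%:R : R) != 0.
Proof. by rewrite pnatr_eq0 -lt0n. Qed.

Lemma key (s : R) (tau : 'M[C]_d) j : 0 <= s -> psd tau ->
  psd ((k%:R * (1 + s))%:C *: (((1 + s)^-1)%:C *: (om + s%:C *: tau)) - pure_proj (psi j)).
Proof.
move=> s0 htau.
have s1 : 1 + s != 0 by rewrite gt_eqF // ltr_pwDl.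
have -> : (k%:R * (1 + s))%:C *: (((1 + s)^-1)%:C *: (om + s%:C *: tau)) =
          Pr psi + (k%:R * s)%:C *: tau.
  rewrite scalerA -realcM -mulrA divff // mulr1 scalerDr avgE scalerA -realcM divff ?kR0 //.
  by rewrite scale1r scalerA -realcM.
rewrite addrAC; apply: psdD; first exact: psd_Pr_rho.
by apply: psdZ => //; rewrite ler0c mulr_ge0.
Qed.


Lemma eta_elem_le (s : R) (tau : 'M[C]_d) (N : 'M[C]_d -> 'M[C]_(k * d)) :
  0 <= s -> is_state tau ->
  incoherent (((1 + s)^-1)%:C *: (om + s%:C *: tau)) ->
  is_MIO N ->
  complex.Re (\sum_(j < k) (unif j)%:C *
      \tr (N (pure_proj (psi j)) *m (delta_mx j j *t (1%:M : 'M[C]_d))))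
    = P_suc unif (fun j => pure_proj (psi j)) ->
  \sum_(j < k) unif j * robustness (ptraceB (N (pure_proj (psi j)))) <= s.
Proof.
move=> s0 [htau ttau] hinc [hch hmio] hP.
set d0 := ((1 + s)^-1)%:C *: (om + s%:C *: tau).
set Y := N d0.
have [[hY tY] dY] : incoherent Y by apply: hmio.
set K := k%:R * (1 + s).
pose c j b := \tr (blk b (N (pure_proj (psi j)))).
have c0 j b : 0 <= c j b.
  by apply: psd_tr; apply: psd_blk; apply: (chan_psd hch); apply: psd_pure.
have csum j : \sum_b c j b = 1.
  by rewrite /c tr_blk_sum (chan_tr hch) (tr_rho ortho).
have cle j : 1 - c j j = \sum_(b | b != j) c j b.
  by rewrite -(csum j) (bigD1 j) //= addrAC subrr add0r.
have hP1 : 1 <= complex.Re (\sum_(j < k) ((k%:R^-1 : R)%:C) * c j j).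
  apply: le_trans (Psuc_ge1 hk ortho) _; rewrite -hP /unif le_eqVlt; apply/orP; left.
  by apply/eqP; congr complex.Re; apply: eq_bigr => j _; rewrite tr_D.
have cjj j : c j j = 1.
  set z := \sum_(j < k) ((k%:R^-1 : R)%:C) * (1 - c j j).
  have z0 : 0 <= z.
    apply: sumr_ge0 => i _; apply: mulr_ge0; first by rewrite ler0c invr_ge0 ler0n.
    by rewrite cle; apply: sumr_ge0.
  have zE : z = 1 - \sum_(j < k) ((k%:R^-1 : R)%:C) * c j j.
    rewrite /z (eq_bigr (fun j => (k%:R^-1 : R)%:C - (k%:R^-1 : R)%:C * c j j)).
      by rewrite sumrB (@sumkC R k hk).
    by move=> i _; rewrite mulrBr mulr1.
  have ez : \sum_(j < k) ((k%:R^-1 : R)%:C) * c j j = 1 - z.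
    by rewrite zE opprB addrC subrK.
  have zre : complex.Re z = 0.
    apply/le_anti; rewrite Re_ge0 // andbT.
    by move: hP1; rewrite ez raddfB /= -[X in X <= _ -> _]addr0 lerD2l oppr_ge0.
  have zz : z = 0 by rewrite (ge0_real z0) zre.
  move/eqP: zz; rewrite psumr_eq0 => [/allP /(_ j (mem_index_enum _))|i _]; last first.
    apply: mulr_ge0; first by rewrite ler0c invr_ge0 ler0n.
    by rewrite cle; apply: sumr_ge0.
  rewrite mulf_eq0 => /orP [|].
    by move/eqP; case => /eqP; rewrite invr_eq0 (negbTE kR0).
  by rewrite subr_eq0 => /eqP <-.
have cb j b : b != j -> blk b (N (pure_proj (psi j))) = 0.
  move=> ne; apply: psd_tr0.
    by apply: psd_blk; apply: (chan_psd hch); apply: psd_pure.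
  move: (cle j); rewrite cjj subrr => /esym /eqP.
  rewrite psumr_eq0 => [/allP /(_ b (mem_index_enum _))|i _ //].
  by rewrite ne /= => /eqP.
have hpt j : ptraceB (N (pure_proj (psi j))) = blk j (N (pure_proj (psi j))).
  rewrite ptraceBE (bigD1 j) //= big1 ?addr0 //.
  by move=> b ne; apply: cb.
pose t j := complex.Re (\tr (blk j Y)).
have hrob j : robustness (ptraceB (N (pure_proj (psi j)))) <= K * t j - 1.
  rewrite hpt; apply: rob_le.
  - split; first by apply: psd_blk; apply: (chan_psd hch); apply: psd_pure.
    exact: cjj.
  - exact: psd_blk.
  - exact: blk_diag.
  - by rewrite mulr_ge0 // addr_ge0.
  - rewrite -blkZ -blkB -(chanZ hch) -(chanB hch); apply: psd_blk; apply: (chan_psd hch).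
    exact: key.
have tsum : \sum_j t j = 1.
  have e : \sum_j (t j)%:C = 1 :> C.
    rewrite -tY -tr_blk_sum; apply: eq_bigr => j _.
    by rewrite /t -ge0_real //; apply: psd_tr; apply: psd_blk.
  by move: e; rewrite -rmorph_sum => -[].
rewrite /unif.
apply: (le_trans (y := \sum_(j < k) k%:R^-1 * (K * t j - 1))).
  apply: ler_sum => j _; apply: ler_wpM2l; last exact: hrob.
  by rewrite invr_ge0 ler0n.
rewrite (eq_bigr (fun j => (1 + s) * t j - k%:R^-1)); last first.
  move=> j _; rewrite mulrBr mulr1 /K !mulrA mulVf ?kR0 // mul1r //.
by rewrite sumrB -mulr_sumr tsum mulr1 (@sumk R k hk) addrAC subrr add0r.
Qed.

End S6.


Section S7.
Variable R : realType.
Local Notation C := R[i].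
Variables k d : nat.
Hypothesis hk : (0 < k)%N.
Hypothesis hkd : (k < d)%N.
Variable psi : 'I_k -> 'cV[C]_d.
Hypothesis ortho : orthonormal_vecs psi.

Local Notation om := (avg_state unif (fun j => pure_proj (psi j))).

Lemma k0 : (0 : R) < k%:R. Proof. by rewrite ltr0n. Qed.
Lemma d0 : (0 : R) < d%:R. Proof. by rewrite ltr0n (leq_trans hk (ltnW hkd)). Qed.
Lemma dk0 : (0 : R) < d%:R - k%:R. Proof. by rewrite subr_gt0 ltr_nat. Qed.

Lemma realcn (n : nat) : ((n%:R : R)%:C : C) = n%:R.
Proof. by rewrite rmorph_nat. Qed.

Definition s0 : R := d%:R / k%:R - 1.

Lemma s0_ge0 : 0 <= s0.
Proof.
rewrite /s0 subr_ge0 ler_pdivlMr ?k0 // mul1r ler_nat; exact: ltnW.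
Qed.

Lemma rob_set_s0 : 0 <= s0 /\ exists tau : 'M[C]_d, is_state tau /\
   incoherent (((1 + s0)^-1)%:C *: (om + s0%:C *: tau)).
Proof.
split; first exact: s0_ge0.
have hk0 := k0; have hd0 := d0; have hdk := dk0.
exists (((d%:R - k%:R)^-1)%:C *: (1%:M - Pr psi)); split.
  split; first by apply: psdZ; [rewrite ler0c invr_ge0 ltW | exact: psd_1_Pr].
  rewrite mxtraceZ mxtraceD raddfN /= mxtrace1 (tr_Pr ortho) -!realcn -realcB -realcM.
  by rewrite mulVf // gt_eqF.
have -> : ((1 + s0)^-1)%:C *: (om + s0%:C *: (((d%:R - k%:R)^-1)%:C *: (1%:M - Pr psi)))
    = (d%:R^-1)%:C *: (1%:M : 'M[C]_d).
  rewrite avgE scalerA -realcM.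
  have -> : s0 * (d%:R - k%:R)^-1 = k%:R^-1.
    rewrite /s0; field; rewrite ?gt_eqF //.
  rewrite -scalerDr addrC subrK scalerA -realcM.
  rewrite addrC subrK.
  have -> : (d%:R / k%:R)^-1 / k%:R = d%:R^-1 :> R.
    by field; rewrite ?gt_eqF.
  by [].
split; last exact/diagZ/scalar_mx_is_diag.
split; first by apply: psdZ; [rewrite ler0c invr_ge0 ltW | exact: psd1].
by rewrite mxtraceZ mxtrace1 -realcn -realcM mulVf // gt_eqF.
Qed.

Lemma rob_om_le : robustness om <= s0.
Proof. by apply: inf_le_of; [move=> y [] | exact: rob_set_s0]. Qed.

End S7.


Section S8.
Variable R : realType.
Local Notation C := R[i].
Variables k d : nat.
Hypothesis hk : (0 < k)%N.
Hypothesis hkd : (k < d)%N.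
Variable psi : 'I_k -> 'cV[C]_d.
Hypothesis ortho : orthonormal_vecs psi.

Local Notation om := (avg_state unif (fun j => pure_proj (psi j))).

Lemma om_sq : om *m om = ((k%:R^-1 : R)%:C) *: om.
Proof. by rewrite avgE -scalemxAl -scalemxAr (Pr2 ortho) scalerA. Qed.

Lemma tr_om : \tr om = 1.
Proof.
rewrite avgE mxtraceZ (tr_Pr ortho) -realcn -realcM mulVf //.
by rewrite pnatr_eq0 -lt0n.
Qed.

Lemma eig_vals lam : spectrum om lam -> forall i, lam i = 0 \/ lam i = k%:R^-1.
Proof.
move=> hs i.
have hr : root (char_poly om) (lam i)%:C.
  rewrite hs; apply/rootP; rewrite horner_prod (bigD1 i) //= hornerXsubC subrr mul0r //.
move: hr; rewrite -eigenvalue_root_char => /eigenvalueP [v hv nz].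
have : ((lam i)%:C * (lam i)%:C) *: v = (((k%:R^-1 : R)%:C) * (lam i)%:C) *: v.
  have e1 : v *m om *m om = ((lam i)%:C * (lam i)%:C) *: v.
    by rewrite hv -scalemxAl hv scalerA.
  have e2 : v *m (om *m om) = (((k%:R^-1 : R)%:C) * (lam i)%:C) *: v.
    by rewrite om_sq -scalemxAr hv scalerA.
  by rewrite -e1 -e2 mulmxA.
move=> e.
have [j vj] : exists j, v 0 j != 0.
  apply/existsP; apply: contraR nz => /existsPn h; apply/eqP/matrixP => a b.
  by rewrite !ord1 mxE; apply/eqP; move: (h b); rewrite negbK.
have := congr1 (fun M : 'rV[C]_d => M 0 j) e; rewrite /= !mxE => h; move: (mulIf vj h) => /eqP.
rewrite -subr_eq0 -mulrBl mulf_eq0 => /orP [/eqP ez|/eqP ez].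
  right; move: (congr1 (@complex.Re R) ez) => /= /eqP.
  by rewrite subr_eq0 => /eqP.
by left; move: (congr1 (@complex.Re R) ez) => /=.
Qed.


Lemma dpos : (0 < d)%N.
Proof. exact: (leq_trans hk (ltnW hkd)). Qed.

Lemma sum_lam lam : spectrum om lam -> \sum_i lam i = 1.
Proof.
move=> hs.
have ct := char_poly_trace om dpos.
set ps := map (fun i : 'I_d => ((lam i)%:C : C)) (index_enum 'I_d).
have sz : size ps = d.
  by rewrite size_map [index_enum _]unlock -enumT size_enum_ord.
have hp : char_poly om = \prod_(p <- ps) ('X - p%:P).
  by rewrite hs big_map.
have cp := coefPn_prod_XsubC (ps := ps); rewrite sz in cp.
have := cp (lt0n_neq0 dpos); rewrite -hp ct tr_om big_map => /eqP.
rewrite eqr_opp => /eqP e.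
have : ((\sum_i lam i)%:C : C) = 1 by rewrite rmorph_sum -e.
by case.
Qed.

Lemma xlog_lam lam : spectrum om lam -> forall i,
  xlog2x (lam i) = lam i * log2 (k%:R^-1).
Proof.
move=> hs i; rewrite /xlog2x; case: (eig_vals hs i) => ->.
  by rewrite eqxx mul0r.
by rewrite invr_eq0 pnatr_eq0 (negbTE (lt0n_neq0 hk)).
Qed.

Lemma ent_val lam : spectrum om lam -> - \sum_i xlog2x (lam i) = log2 k%:R.
Proof.
move=> hs; rewrite (eq_bigr _ (fun i _ => xlog_lam hs i)) -mulr_suml sum_lam // mul1r.
rewrite /log2 lnV ?mulNr ?opprK // posrE ltr0n //.
Qed.

Lemma log2_ge0 (x : R) : 1 <= x -> 0 <= log2 x.
Proof.
move=> h; rewrite /log2; apply: mulr_ge0; first exact: ln_ge0.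
rewrite invr_ge0 ltW // ln_gt0 //; lra.
Qed.

Lemma ent_le : vN_entropy om <= log2 k%:R.
Proof.
apply: sup_le_of; first by move=> y [lam [hs ->]]; rewrite ent_val.
by apply: log2_ge0; rewrite ler1n.
Qed.

End S8.

End Aux.
Import Aux.
Unset Implicit Arguments. Set Strict Implicit. Set Printing Implicit Defensive.
Local Open Scope ring_scope.


Lemma sup_ge0_of (R : realType) (S : set R) b :
  (forall y, S y -> 0 <= y) -> (forall y, S y -> y <= b) -> 0 <= sup S.
Proof.
move=> h0 hb; have [[x Sx]|e] := pselect (S !=set0)%classic.
  by apply: le_trans (h0 _ Sx) _; apply: le_sup_of hb Sx.
by rewrite (empty_set0 e) sup0.
Qed.

Lemma log2_le (R : realType) (x y : R) : 0 < x -> x <= y -> log2 x <= log2 y.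
Proof.
move=> x0 xy; rewrite /log2 ler_pM2r ?invr_gt0 ?ln_gt0 //; last lra.
by rewrite ler_ln ?posrE // (lt_le_trans x0 xy).
Qed.

Section Helper.
Local Open Scope complex_scope.
Variable R : realType.
Variables d k : nat.
Variable psi : 'I_k -> 'cV[R[i]]_d.
Hypothesis hk : (0 < k)%N.
Hypothesis ortho : orthonormal_vecs psi.
Local Notation om := (avg_state unif (fun j => pure_proj (psi j))).

Lemma elem_le s : (0 <= s /\ exists tau, is_state tau /\
      incoherent (((1 + s)^-1)%:C *: (om + s%:C *: tau))) ->
    forall N, is_MIO N ->
         complex.Re (\sum_(j < k) (unif j)%:C *
               \tr (N (pure_proj (psi j)) *m (delta_mx j j *t (1%:M : 'M[R[i]]_d)))) =
           P_suc unif (fun j => pure_proj (psi j)) ->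
         \sum_(j < k) unif j * robustness (ptraceB (N (pure_proj (psi j)))) <= s.
Proof.
move=> [sge0 [tau [htau hinc]]] N hN hP.
exact: (eta_elem_le hk ortho sge0 htau hinc hN hP).
Qed.

Lemma eta_le s : (0 <= s /\ exists tau, is_state tau /\
      incoherent (((1 + s)^-1)%:C *: (om + s%:C *: tau))) ->
  eta_MIO unif (fun j => pure_proj (psi j)) <= s.
Proof.
move=> hs; apply: sup_le_of; last by case: hs.
move=> y [N [hN [hP ->]]]; exact: elem_le.
Qed.
End Helper.

Theorem propositionS1 (R : realType) (d k : nat) (psi : 'I_k -> 'cV[R[i]]_d) :
  (0 < k)%N -> (k < d)%N -> orthonormal_vecs psi ->
  C_MIO unif (fun j => pure_proj (psi j)) +
    vN_entropy (avg_state unif (fun j => pure_proj (psi j))) = log2 d%:R ->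
  Cmax (avg_state unif (fun j => pure_proj (psi j))) +
    vN_entropy (avg_state unif (fun j => pure_proj (psi j))) = log2 d%:R.
Proof.
move=> hk hkd ortho.
rewrite /C_MIO /Cmax.
set om := avg_state _ _.
set eta := eta_MIO _ _.
set S := vN_entropy om.
set r := robustness om.
have rs0 : r <= s0 R k d := rob_om_le hk hkd ortho.
have r0 : 0 <= r := rob_ge0 om.
have SL : S <= log2 k%:R := ent_le hk hkd ortho.
have eta_r : eta <= r.
  apply: lb_le_inf; first by exists (s0 R k d); exact: rob_set_s0.
  by move=> s hs; apply: (eta_le _ _ _ _ hk ortho).
have eta0 : 0 <= eta.
  apply: (@sup_ge0_of R _ (s0 R k d)); last by move=> y [N [hN [hP ->]]]; exact: (elem_le _ _ _ _ hk ortho _ (rob_set_s0 hk hkd ortho)).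
  move=> y [N [hN [hP ->]]]; apply: sumr_ge0 => j _; apply: mulr_ge0.
    by rewrite /unif invr_ge0 ler0n.
  exact: rob_ge0.
have hkR : (0 : R) < k%:R by rewrite ltr0n.
have hdR : (0 : R) < d%:R by rewrite ltr0n (leq_trans hk (ltnW hkd)).
have AB : log2 (1 + eta) <= log2 (1 + r).
  apply: log2_le; [lra | lra].
have Bd : log2 (1 + r) <= log2 d%:R - log2 k%:R.
  have -> : log2 d%:R - log2 k%:R = log2 (1 + s0 R k d).
    have -> : 1 + s0 R k d = d%:R / k%:R by rewrite /s0 addrC subrK.
    rewrite /log2 ln_div ?posrE // mulrBl //.
  apply: log2_le; lra.
lra.
Qed.
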